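(* Let $\mathcal{LS}_{\mathfrak{A}_1}$ be the operad (variety) of left-symmetric algebras over a field of characteristic $0$ satisfying the identity $(ab)c+(ba)c+(ac)b+(ca)b+(bc)a+(cb)a=0$. Its Koszul dual operad $\mathcal{LS}_{\mathfrak{A}_1}^{(!)}$ is the operad of alternative algebras satisfying the left-commutative identity $a(bc)=b(ac)$.
   Context: A left-symmetric algebra is an algebra whose associator $(a,b,c)=(ab)c-a(bc)$ satisfies $(a,b,c)=(b,a,c)$. An algebra is alternative if $(a,a,b)=0=(a,b,b)$. The Koszul dual of a binary quadratic operad is taken in the sense of Ginzburg–Kapranov; equivalently, $\mathcal{P}^{(!)}$ is the quadratic operad whose algebras $U$ are defined by exactly those degree-3 identities making $S\otimes U$, with product $(a\otimes u)(b\otimes v)=ab\otimes uv$, Lie-admissible (its commutator satisfies the Jacobi identity) for every $\mathcal{P}$-algebra $S$. *)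

(* Defs.v *)
From HB Require Import structures.
From mathcomp Require Import all_boot all_order all_algebra all_fingroup.
Set Implicit Arguments. Unset Strict Implicit. Unset Printing Implicit Defensive.
Import GRing.Theory.
Local Open Scope ring_scope.

Definition bilinear_prod (K : fieldType) (A : lmodType K) (mul : A -> A -> A) :=
  (forall (k : K) (a b c : A), mul (k *: a + b) c = k *: mul a c + mul b c) /\
  (forall (k : K) (a b c : A), mul a (k *: b + c) = k *: mul a b + mul a c).

Definition alg_class (K : fieldType) := forall A : lmodType K, (A -> A -> A) -> Prop.

Definition assoc (K : fieldType) (A : lmodType K) (mul : A -> A -> A) (a b c : A) :=
  mul (mul a b) c - mul a (mul b c).

Definition left_symmetric (K : fieldType) (A : lmodType K) (mul : A -> A -> A) :=
  forall a b c : A, assoc mul a b c = assoc mul b a c.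

Definition identA1 (K : fieldType) (A : lmodType K) (mul : A -> A -> A) :=
  forall a b c : A,
    mul (mul a b) c + mul (mul b a) c + mul (mul a c) b + mul (mul c a) b
    + mul (mul b c) a + mul (mul c b) a = 0.

Definition alternative (K : fieldType) (A : lmodType K) (mul : A -> A -> A) :=
  forall a b : A, assoc mul a a b = 0 /\ assoc mul a b b = 0.

Definition left_commutative (K : fieldType) (A : lmodType K) (mul : A -> A -> A) :=
  forall a b c : A, mul a (mul b c) = mul b (mul a c).

Definition LS_A1 (K : fieldType) : alg_class K :=
  fun A mul => left_symmetric mul /\ identA1 mul.

Definition Alt_LC (K : fieldType) : alg_class K :=
  fun A mul => alternative mul /\ left_commutative mul.

(* Arity-3 component of the free (magmatic) binary operad:             *)
(* multilinear degree-3 nonassociative polynomials in x_0, x_1, x_2.   *)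
(* Basis monomials are indexed by (s, b) with s : 'S_3 and b : bool:   *)
(*   (s, false) = (x_{s 0} x_{s 1}) x_{s 2},                           *)
(*   (s, true)  =  x_{s 0} (x_{s 1} x_{s 2}).                          *)
(* An element is a coefficient function on these 12 monomials.         *)
Definition mono := ('S_3 * bool)%type.

Definition mono_eval (K : fieldType) (A : lmodType K) (mul : A -> A -> A)
  (x : 'I_3 -> A) (m : mono) : A :=
  let s := m.1 in
  if m.2 then mul (x (s 0)) (mul (x (s 1)) (x (s 2)))
  else mul (mul (x (s 0)) (x (s 1))) (x (s 2)).

Definition poly_eval (K : fieldType) (A : lmodType K) (mul : A -> A -> A)
  (f : {ffun mono -> K}) (x : 'I_3 -> A) : A :=
  \sum_(m : mono) f m *: mono_eval mul x m.

(* The arity-3 component of the operad of a variety: the multilinear   *)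
(* degree-3 identities satisfied by every algebra of the class.  For a *)
(* variety defined by degree-3 identities this is the quadratic        *)
(* relation space R of the corresponding (quadratic) operad.           *)
Definition ident3 (K : fieldType) (P : alg_class K) (f : {ffun mono -> K}) : Prop :=
  forall (A : lmodType K) (mul : A -> A -> A),
    bilinear_prod mul -> P A mul -> forall x : 'I_3 -> A, poly_eval mul f x = 0.

Definition gk_pairing (K : fieldType) (f g : {ffun mono -> K}) : K :=
  \sum_(s : 'S_3) (-1) ^+ odd_perm s *
     (f (s, false) * g (s, false) - f (s, true) * g (s, true)).

Definition koszul_dual_rel (K : fieldType) (R : {ffun mono -> K} -> Prop)
  (g : {ffun mono -> K}) : Prop :=
  forall f, R f -> gk_pairing f g = 0.

(* Main.v *)
Require Import Defs.
From HB Require Import structures.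
From mathcomp Require Import all_boot all_order all_algebra all_fingroup.
From mathcomp Require Import ring.
Set Implicit Arguments. Unset Strict Implicit. Unset Printing Implicit Defensive.
Import GRing.Theory.
Local Open Scope ring_scope.

Definition i0 : 'I_3 := @Ordinal 3 0 isT.
Definition i1 : 'I_3 := @Ordinal 3 1 isT.
Definition i2 : 'I_3 := @Ordinal 3 2 isT.
Lemma o0 (s : 'S_3) : s 0 = s i0. Proof. by congr (s _); apply/val_inj. Qed.
Lemma o1 (s : 'S_3) : s 1 = s i1. Proof. by congr (s _); apply/val_inj. Qed.
Lemma o2 (s : 'S_3) : s 2 = s i2. Proof. by congr (s _); apply/val_inj. Qed.
Lemma ord3_cases (i : 'I_3) : [\/ i = i0, i = i1 | i = i2].
Proof. case: i => [[|[|[|i]]] Hi] //; [apply: Or31|apply: Or32|apply: Or33]; exact/val_inj. Qed.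

Definition f3 (a b c : 'I_3) (i : 'I_3) : 'I_3 :=
  if val i == 0%N then a else if val i == 1%N then b else c.
Lemma f3_inj a b c : [&& a != b, b != c & a != c] -> injective (f3 a b c).
Proof.
case/and3P=> ab bc ac.
move=> [[|[|[|i]]] Hi] [[|[|[|j]]] Hj] //=; rewrite /f3 /=; move=> E; apply/val_inj => //=;
 rewrite ?E ?eqxx in ab bc ac; by [].
Qed.
Definition P012 : 'S_3 := perm (@f3_inj i0 i1 i2 isT).
Definition P021 : 'S_3 := perm (@f3_inj i0 i2 i1 isT).
Definition P102 : 'S_3 := perm (@f3_inj i1 i0 i2 isT).
Definition P120 : 'S_3 := perm (@f3_inj i1 i2 i0 isT).
Definition P201 : 'S_3 := perm (@f3_inj i2 i0 i1 isT).
Definition P210 : 'S_3 := perm (@f3_inj i2 i1 i0 isT).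

Lemma pv_gen a b c (H : [&& a != b, b != c & a != c]) :
  [/\ perm (f3_inj H) i0 = a, perm (f3_inj H) i1 = b & perm (f3_inj H) i2 = c].
Proof. by rewrite !permE. Qed.

Ltac pvt := rewrite /P012 /P021 /P102 /P120 /P201 /P210 permE.
Lemma pv_P012_0 : P012 i0 = i0. Proof. by pvt. Qed.
Lemma pv_P012_1 : P012 i1 = i1. Proof. by pvt. Qed.
Lemma pv_P012_2 : P012 i2 = i2. Proof. by pvt. Qed.
Lemma pv_P021_0 : P021 i0 = i0. Proof. by pvt. Qed.
Lemma pv_P021_1 : P021 i1 = i2. Proof. by pvt. Qed.
Lemma pv_P021_2 : P021 i2 = i1. Proof. by pvt. Qed.
Lemma pv_P102_0 : P102 i0 = i1. Proof. by pvt. Qed.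
Lemma pv_P102_1 : P102 i1 = i0. Proof. by pvt. Qed.
Lemma pv_P102_2 : P102 i2 = i2. Proof. by pvt. Qed.
Lemma pv_P120_0 : P120 i0 = i1. Proof. by pvt. Qed.
Lemma pv_P120_1 : P120 i1 = i2. Proof. by pvt. Qed.
Lemma pv_P120_2 : P120 i2 = i0. Proof. by pvt. Qed.
Lemma pv_P201_0 : P201 i0 = i2. Proof. by pvt. Qed.
Lemma pv_P201_1 : P201 i1 = i0. Proof. by pvt. Qed.
Lemma pv_P201_2 : P201 i2 = i1. Proof. by pvt. Qed.
Lemma pv_P210_0 : P210 i0 = i2. Proof. by pvt. Qed.
Lemma pv_P210_1 : P210 i1 = i1. Proof. by pvt. Qed.
Lemma pv_P210_2 : P210 i2 = i0. Proof. by pvt. Qed.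
Definition pvE := (pv_P012_0, pv_P012_1, pv_P012_2, pv_P021_0, pv_P021_1, pv_P021_2, pv_P102_0, pv_P102_1, pv_P102_2, pv_P120_0, pv_P120_1, pv_P120_2, pv_P201_0, pv_P201_1, pv_P201_2, pv_P210_0, pv_P210_1, pv_P210_2).

Lemma ieq : ((i0 == i1) = false) * ((i0 == i2) = false) * ((i1 == i0) = false) *
  ((i1 == i2) = false) * ((i2 == i0) = false) * ((i2 == i1) = false).
Proof. by []. Qed.

Lemma eqpE (s t : 'S_3) : (s == t) = [&& s i0 == t i0, s i1 == t i1 & s i2 == t i2].
Proof.
apply/eqP/and3P => [->|[/eqP h0 /eqP h1 /eqP h2]]; first by rewrite !eqxx.
by apply/permP => i; case: (ord3_cases i) => ->.
Qed.

Lemma S3_cover (s : 'S_3) : s \in [:: P012; P102; P021; P201; P120; P210].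
Proof.
have inj := @perm_inj _ s.
have [h0|h0|h0] := ord3_cases (s i0); have [h1|h1|h1] := ord3_cases (s i1);
have [h2|h2|h2] := ord3_cases (s i2);
 try (by have := inj i0 i1; rewrite h0 h1 => /(_ erefl));
 try (by have := inj i0 i2; rewrite h0 h2 => /(_ erefl));
 try (by have := inj i1 i2; rewrite h1 h2 => /(_ erefl));
 rewrite !inE !eqpE h0 h1 h2 !pvE !eqxx ?ieq //.
Qed.

Lemma S3_uniq : uniq [:: P012; P102; P021; P201; P120; P210].
Proof. by rewrite /= !inE !eqpE !pvE !eqxx ?ieq. Qed.

Lemma sumS3 (V : nmodType) (F : 'S_3 -> V) :
  \sum_(s : 'S_3) F s = F P012 + F P102 + F P021 + F P201 + F P120 + F P210.
Proof.
rewrite (eq_bigl (mem [:: P012; P102; P021; P201; P120; P210])); last first.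
  by move=> s; rewrite /= S3_cover.
by rewrite -big_uniq ?S3_uniq // !big_cons big_nil /= addr0 !addrA.
Qed.

Lemma tp102 : P102 = tperm i0 i1.
Proof. by apply/permP => i; case: (ord3_cases i) => ->; rewrite pvE /tperm !permE. Qed.
Lemma tp021 : P021 = tperm i1 i2.
Proof. by apply/permP => i; case: (ord3_cases i) => ->; rewrite pvE /tperm !permE. Qed.
Lemma tp210 : P210 = tperm i0 i2.
Proof. by apply/permP => i; case: (ord3_cases i) => ->; rewrite pvE /tperm !permE. Qed.
Lemma tp120 : P120 = (tperm i1 i2 * tperm i0 i1)%g.
Proof. by apply/permP => i; case: (ord3_cases i) => ->; rewrite permM pvE /tperm !permE. Qed.
Lemma tp201 : P201 = (tperm i0 i1 * tperm i1 i2)%g.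
Proof. by apply/permP => i; case: (ord3_cases i) => ->; rewrite permM pvE /tperm !permE. Qed.
Lemma tp012 : P012 = 1%g.
Proof. by apply/permP => i; case: (ord3_cases i) => ->; rewrite perm1 pvE. Qed.

Lemma oddE : (odd_perm P012 = false) * (odd_perm P102 = true) * (odd_perm P021 = true)
  * (odd_perm P201 = false) * (odd_perm P120 = false) * (odd_perm P210 = true).
Proof.
by rewrite tp012 tp102 tp021 tp201 tp120 tp210 ?odd_permM !odd_tperm odd_perm1.
Qed.

Section Gen.
Variable K : fieldType.
Local Notation V := {ffun mono -> K}.

Definition dlt_def (m : mono) : V := [ffun m' => (m' == m)%:R].
Definition sc_def (a : K) (f : V) : V := [ffun m => a * f m].
Fact dlt_key : unit. Proof. exact: tt. Qed.
Definition dlt := locked_with dlt_key dlt_def.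
Definition sc := locked_with dlt_key sc_def.
Lemma dltE m m' : dlt m m' = (m' == m)%:R. Proof. by rewrite /dlt unlock ffunE. Qed.
Lemma scE a f m : sc a f m = a * f m. Proof. by rewrite /sc unlock ffunE. Qed.

Section PE.
Variables (A : lmodType K) (mul : A -> A -> A) (x : 'I_3 -> A).

Lemma pe_add f g : poly_eval mul (f + g) x = poly_eval mul f x + poly_eval mul g x.
Proof. by rewrite /poly_eval -big_split; apply: eq_bigr => m _; rewrite ffunE scalerDl. Qed.
Lemma pe_opp f : poly_eval mul (- f) x = - poly_eval mul f x.
Proof. by rewrite /poly_eval -sumrN; apply: eq_bigr => m _; rewrite ffunE scaleNr. Qed.
Lemma pe_sub f g : poly_eval mul (f - g) x = poly_eval mul f x - poly_eval mul g x.
Proof. by rewrite pe_add pe_opp. Qed.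
Lemma pe_sc a f : poly_eval mul (sc a f) x = a *: poly_eval mul f x.
Proof. by rewrite /poly_eval scaler_sumr; apply: eq_bigr => m _; rewrite scE scalerA. Qed.
Lemma meF (s : 'S_3) : mono_eval mul x (s, false) = mul (mul (x (s i0)) (x (s i1))) (x (s i2)).
Proof. by rewrite /mono_eval /= !o0 !o1 !o2. Qed.
Lemma meT (s : 'S_3) : mono_eval mul x (s, true) = mul (x (s i0)) (mul (x (s i1)) (x (s i2))).
Proof. by rewrite /mono_eval /= !o0 !o1 !o2. Qed.
Lemma pe_dlt m : poly_eval mul (dlt m) x = mono_eval mul x m.
Proof.
rewrite /poly_eval (bigD1 m) //= dltE eqxx scale1r big1 ?addr0 // => m' /negbTE ne.
by rewrite dltE ne scale0r.
Qed.
End PE.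

Lemma ident3_add P f g : ident3 P f -> ident3 P g -> ident3 (K:=K) P (f + g).
Proof. by move=> hf hg A mul b p x; rewrite pe_add hf ?hg ?addr0. Qed.
Lemma ident3_sub P f g : ident3 P f -> ident3 P g -> ident3 (K:=K) P (f - g).
Proof. by move=> hf hg A mul b p x; rewrite pe_sub hf ?hg ?subr0. Qed.
Lemma ident3_sc P a f : ident3 P f -> ident3 (K:=K) P (sc a f).
Proof. by move=> hf A mul b p x; rewrite pe_sc hf ?scaler0. Qed.

Lemma sum_mono (W : nmodType) (F : mono -> W) :
  \sum_(m : mono) F m = (F (P012, true) + F (P012, false)) + (F (P102, true) + F (P102, false))
   + (F (P021, true) + F (P021, false)) + (F (P201, true) + F (P201, false))
   + (F (P120, true) + F (P120, false)) + (F (P210, true) + F (P210, false)).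
Proof.
rewrite (eq_bigr (fun m => F (m.1, m.2))); last by case.
rewrite -(pair_bigA _ (fun s b => F (s, b))) /=.
rewrite (sumS3 (fun s => \sum_(b : bool) F (s, b))).
by rewrite !big_bool.
Qed.

Lemma ffun_decomp (g : V) (m : mono) : g m = \sum_(m' : mono) g m' * (m == m')%:R.
Proof.
rewrite (bigD1 m) //= eqxx mulr1 big1 ?addr0 // => m' ne.
by rewrite eq_sym (negbTE ne) mulr0.
Qed.

Lemma gkE (f g : V) : gk_pairing f g =
     (f (P012, false) * g (P012, false) - f (P012, true) * g (P012, true))
   - (f (P102, false) * g (P102, false) - f (P102, true) * g (P102, true))
   - (f (P021, false) * g (P021, false) - f (P021, true) * g (P021, true))
   + (f (P201, false) * g (P201, false) - f (P201, true) * g (P201, true))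
   + (f (P120, false) * g (P120, false) - f (P120, true) * g (P120, true))
   - (f (P210, false) * g (P210, false) - f (P210, true) * g (P210, true)).
Proof. rewrite /gk_pairing sumS3 !oddE /=. ring. Qed.

Lemma gk_add (f f' g : V) : gk_pairing (f + f') g = gk_pairing f g + gk_pairing f' g.
Proof.
rewrite /gk_pairing -big_split; apply: eq_bigr => s _; rewrite !ffunE /=.
by move: ((-1) ^+ odd_perm s) => c; ring.
Qed.
Lemma gk_sub (f f' g : V) : gk_pairing (f - f') g = gk_pairing f g - gk_pairing f' g.
Proof.
rewrite /gk_pairing -sumrB; apply: eq_bigr => s _; rewrite !ffunE /=.
by move: ((-1) ^+ odd_perm s) => c; ring.
Qed.
Lemma gk_dlt (p : 'S_3) (b : bool) (g : V) :
  gk_pairing (dlt (p, b)) g = (-1) ^+ odd_perm p * (if b then - g (p, true) else g (p, false)).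
Proof.
rewrite /gk_pairing (bigD1 p) //= !dltE !xpair_eqE !eqxx /= big1 ?addr0.
  by case: b => /=; move: ((-1) ^+ odd_perm p) => c; ring.
move=> s /negbTE ne; rewrite !dltE !xpair_eqE ne /=; move: ((-1) ^+ odd_perm s) => c; ring.
Qed.

Section Alg.
Variables (A : lmodType K) (mul : A -> A -> A) (bil : bilinear_prod mul).
Lemma mulDl a b c : mul (a + b) c = mul a c + mul b c.
Proof. by have := bil.1 1 a b c; rewrite !scale1r. Qed.
Lemma mulDr a b c : mul a (b + c) = mul a b + mul a c.
Proof. by have := bil.2 1 a b c; rewrite !scale1r. Qed.
Lemma assocD1 a a' b c : assoc mul (a + a') b c = assoc mul a b c + assoc mul a' b c.
Proof. by rewrite /assoc !mulDl opprD addrACA. Qed.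
Lemma assocD2 a b b' c : assoc mul a (b + b') c = assoc mul a b c + assoc mul a b' c.
Proof. by rewrite /assoc !mulDl !mulDr mulDl opprD addrACA. Qed.
Lemma assocD3 a b c c' : assoc mul a b (c + c') = assoc mul a b c + assoc mul a b c'.
Proof. by rewrite /assoc !mulDr opprD addrACA. Qed.
Lemma alt_lin1 (h : alternative mul) u v w : assoc mul u v w + assoc mul v u w = 0.
Proof.
have := (h (u + v) w).1; rewrite assocD1 !assocD2 (h u w).1 (h v w).1.
by rewrite add0r addr0.
Qed.
Lemma alt_lin2 (h : alternative mul) u v w : assoc mul u v w + assoc mul u w v = 0.
Proof.
have := (h u (v + w)).2; rewrite assocD2 !assocD3 (h u v).2 (h u w).2.
by rewrite add0r addr0.
Qed.
End Alg.

End Gen.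

Section Test.
Variable K : fieldType.
Local Notation TA := ({ffun 'I_3 -> K^o} * {ffun 'I_3 * 'I_3 -> K^o} * K^o)%type.
Local Notation F3 := {ffun 'I_3 -> K^o}.
Variables cR cL : 'I_3 -> 'I_3 -> 'I_3 -> K.

Definition tmul (a b : TA) : TA :=
  (0, [ffun ij => a.1.1 ij.1 * b.1.1 ij.2],
   \sum_i \sum_j \sum_k (a.1.1 i * b.1.2 (j, k) * cL i j k + a.1.2 (i, j) * b.1.1 k * cR i j k)).

Definition Tri (T : 'I_3 -> 'I_3 -> 'I_3 -> K) (a b c : F3) : K :=
  \sum_i \sum_j \sum_k (a i * b j * c k * T i j k).

Lemma tmulAB a b c : tmul (tmul a b) c = (0, 0, Tri cR a.1.1 b.1.1 c.1.1).
Proof.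
rewrite /tmul /=; congr (_, _, _).
  by apply/ffunP => ij; rewrite !ffunE mul0r.
apply: eq_bigr => i _; apply: eq_bigr => j _; apply: eq_bigr => k _.
by rewrite !ffunE /= mul0r mul0r add0r.
Qed.

Lemma tmulA_BC a b c : tmul a (tmul b c) = (0, 0, Tri cL a.1.1 b.1.1 c.1.1).
Proof.
rewrite /tmul /=; congr (_, _, _).
  by apply/ffunP => ij; rewrite !ffunE mulr0.
apply: eq_bigr => i _; apply: eq_bigr => j _; apply: eq_bigr => k _.
by rewrite !ffunE /= mulr0 mul0r addr0 mulrA.
Qed.

Lemma sum3_lin (k : K) (F G : 'I_3 -> 'I_3 -> 'I_3 -> K) :
  k * (\sum_i \sum_j \sum_l F i j l) + \sum_i \sum_j \sum_l G i j l
  = \sum_i \sum_j \sum_l (k * F i j l + G i j l).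
Proof.
rewrite mulr_sumr -big_split; apply: eq_bigr => i _.
rewrite mulr_sumr -big_split; apply: eq_bigr => j _.
by rewrite mulr_sumr -big_split.
Qed.

Lemma pairE3 (u v : TA) : u.1.1 = v.1.1 -> u.1.2 = v.1.2 -> u.2 = v.2 -> u = v.
Proof. by case: u => [[u1 u2] u3]; case: v => [[v1 v2] v3] /= -> -> ->. Qed.
Lemma prZD1 (k : K) (u v : TA) : (k *: u + v).1.1 = k *: u.1.1 + v.1.1. Proof. by []. Qed.
Lemma prZD2 (k : K) (u v : TA) : (k *: u + v).1.2 = k *: u.1.2 + v.1.2. Proof. by []. Qed.
Lemma prZD3 (k : K) (u v : TA) : (k *: u + v).2 = k * u.2 + v.2. Proof. by []. Qed.
Lemma prB1 (u v : TA) : (u - v).1.1 = u.1.1 - v.1.1. Proof. by []. Qed.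
Lemma prB2 (u v : TA) : (u - v).1.2 = u.1.2 - v.1.2. Proof. by []. Qed.
Lemma prB3 (u v : TA) : (u - v).2 = u.2 - v.2. Proof. by []. Qed.
Lemma prD3 (u v : TA) : (u + v).2 = u.2 + v.2. Proof. by []. Qed.
Lemma prZ3 (k : K) (u : TA) : (k *: u).2 = k * u.2. Proof. by []. Qed.
Lemma pr03 : (0 : TA).2 = 0. Proof. by []. Qed.

Lemma tmul_bil : bilinear_prod tmul.
Proof.
split=> k a b c; apply: pairE3; rewrite ?prZD1 ?prZD2 ?prZD3 /tmul /=.
- by rewrite scaler0 addr0.
- by apply/ffunP => ij; rewrite !ffunE; rewrite /GRing.scale /=; ring.
- rewrite sum3_lin.
  apply: eq_bigr => i _; apply: eq_bigr => j _; apply: eq_bigr => l _.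
  rewrite !ffunE /GRing.scale /=; ring.
- by rewrite scaler0 addr0.
- by apply/ffunP => ij; rewrite !ffunE; rewrite /GRing.scale /=; ring.
- rewrite sum3_lin.
  apply: eq_bigr => i _; apply: eq_bigr => j _; apply: eq_bigr => l _.
  rewrite !ffunE /GRing.scale /=; ring.
Qed.


Lemma Tri_ext T T' a b c : (forall i j k, T i j k = T' i j k) -> Tri T a b c = Tri T' a b c.
Proof.
by move=> h; apply: eq_bigr => i _; apply: eq_bigr => j _; apply: eq_bigr => k _; rewrite h.
Qed.
Lemma Tri0 T a b c : (forall i j k, T i j k = 0) -> Tri T a b c = 0.
Proof.
move=> h; rewrite /Tri big1 // => i _; rewrite big1 // => j _; rewrite big1 // => k _.
by rewrite h mulr0.
Qed.
Lemma TriD T T' a b c : Tri T a b c + Tri T' a b c = Tri (fun i j k => T i j k + T' i j k) a b c.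
Proof.
rewrite /Tri -big_split; apply: eq_bigr => i _; rewrite -big_split; apply: eq_bigr => j _.
by rewrite -big_split; apply: eq_bigr => k _; rewrite mulrDr.
Qed.
Lemma TriB T T' a b c : Tri T a b c - Tri T' a b c = Tri (fun i j k => T i j k - T' i j k) a b c.
Proof.
rewrite /Tri -sumrB; apply: eq_bigr => i _; rewrite -sumrB; apply: eq_bigr => j _.
by rewrite -sumrB; apply: eq_bigr => k _; rewrite mulrBr.
Qed.
Lemma TriC12 T a b c : Tri T b a c = Tri (fun i j k => T j i k) a b c.
Proof.
rewrite /Tri exchange_big; apply: eq_bigr => i _; apply: eq_bigr => j _; apply: eq_bigr => k _.
by rewrite [b j * a i]mulrC.
Qed.
Lemma TriC23 T a b c : Tri T a c b = Tri (fun i j k => T i k j) a b c.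
Proof.
rewrite /Tri; apply: eq_bigr => i _; rewrite exchange_big; apply: eq_bigr => j _; apply: eq_bigr => k _.
ring.
Qed.
Lemma TriP_cab T a b c : Tri T c a b = Tri (fun i j k => T k i j) a b c.
Proof. by rewrite (TriC12 T a c b) (TriC23 _ a b c). Qed.
Lemma TriP_bca T a b c : Tri T b c a = Tri (fun i j k => T j k i) a b c.
Proof. by rewrite (TriC23 T b a c) (TriC12 _ a b c). Qed.
Lemma TriP_cba T a b c : Tri T c b a = Tri (fun i j k => T k j i) a b c.
Proof. by rewrite (TriC12 T b c a) (TriP_bca _ a b c). Qed.

Lemma assocT a b c : assoc tmul a b c = (0, 0, Tri cR a.1.1 b.1.1 c.1.1 - Tri cL a.1.1 b.1.1 c.1.1).
Proof. rewrite /assoc tmulAB tmulA_BC; apply: pairE3; by rewrite ?prB1 ?prB2 ?prB3 /= ?subrr. Qed.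

Lemma tmul_LS : (forall i j k, cR i j k - cL i j k = cR j i k - cL j i k) -> left_symmetric tmul.
Proof.
move=> h a b c; rewrite !assocT; congr (_, _, _).
by rewrite (TriC12 cR a.1.1) (TriC12 cL a.1.1) !TriB; apply: Tri_ext => i j k; rewrite h.
Qed.

Lemma tmul_A1 : (forall i j k, cR i j k + cR j i k + cR i k j + cR k i j + cR j k i + cR k j i = 0) ->
  identA1 tmul.
Proof.
move=> h a b c; rewrite !tmulAB; apply: pairE3; rewrite ?pr03 /= ?addr0 //.
rewrite (TriC12 cR a.1.1 b.1.1 c.1.1) (TriC23 cR a.1.1 b.1.1 c.1.1) (TriP_cab cR a.1.1 b.1.1 c.1.1).
rewrite (TriP_bca cR a.1.1 b.1.1 c.1.1) (TriP_cba cR a.1.1 b.1.1 c.1.1).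
by rewrite !TriD; apply: Tri0 => i j k; rewrite h.
Qed.

Lemma x_eq0 (x : K) : [pchar K] =i pred0 -> x + x = 0 -> x = 0.
Proof.
move=> /pcharf0P h e; have : (2%:R : K) * x = 0 by rewrite mulr2n mulrDl mul1r e.
by move/eqP; rewrite mulf_eq0 h /= => /eqP.
Qed.

Lemma tmul_alt : [pchar K] =i pred0 ->
  (forall i j k, (cR i j k - cL i j k) + (cR j i k - cL j i k) = 0) ->
  (forall i j k, (cR i j k - cL i j k) + (cR i k j - cL i k j) = 0) -> alternative tmul.
Proof.
move=> ch h1 h2 a b; rewrite !assocT; split; congr (_, _, _); rewrite TriB; apply: x_eq0 => //.
  by rewrite [X in _ + X](TriC12 _ a.1.1) TriD; apply: Tri0 => i j k; rewrite h1.
by rewrite [X in _ + X](TriC23 _ a.1.1) TriD; apply: Tri0 => i j k; rewrite h2.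
Qed.

Lemma tmul_LC : (forall i j k, cL i j k = cL j i k) -> left_commutative tmul.
Proof.
move=> h a b c; rewrite !tmulA_BC; congr (_, _, _).
by rewrite (TriC12 cL a.1.1); apply: Tri_ext => i j k; rewrite h.
Qed.

Definition ebas (i : 'I_3) : TA := ([ffun j => (i == j)%:R], 0, 0).

Lemma sum_dl (a : 'I_3) (F : 'I_3 -> K) : \sum_i ((a == i)%:R * F i) = F a.
Proof.
rewrite (bigD1 a) //= eqxx mul1r big1 ?addr0 // => i ne.
by rewrite eq_sym (negbTE ne) mul0r.
Qed.

Lemma Tri_bas T a b c : Tri T (ebas a).1.1 (ebas b).1.1 (ebas c).1.1 = T a b c.
Proof.
rewrite /Tri.
transitivity (\sum_i ((a == i)%:R * \sum_j ((b == j)%:R * \sum_k ((c == k)%:R * T i j k)))).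
  apply: eq_bigr => i _; rewrite mulr_sumr; apply: eq_bigr => j _.
  rewrite mulr_sumr mulr_sumr; apply: eq_bigr => k _; rewrite !ffunE; ring.
by rewrite sum_dl sum_dl sum_dl.
Qed.

Lemma pe_test (f : {ffun mono -> K}) :
  (poly_eval tmul f ebas).2 = \sum_(m : mono) f m *
     (if m.2 then cL (m.1 0) (m.1 1) (m.1 2) else cR (m.1 0) (m.1 1) (m.1 2)).
Proof.
rewrite /poly_eval (big_morph (fun u : TA => u.2) prD3 pr03).
apply: eq_bigr => -[s bb] _; rewrite prZ3 /mono_eval /=; congr (_ * _).
by case: bb; rewrite ?tmulAB ?tmulA_BC /= Tri_bas.
Qed.

Lemma LS_test (f : {ffun mono -> K}) :
  (forall i j k, cR i j k - cL i j k = cR j i k - cL j i k) ->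
  (forall i j k, cR i j k + cR j i k + cR i k j + cR k i j + cR j k i + cR k j i = 0) ->
  ident3 (@LS_A1 K) f ->
  \sum_(m : mono) f m *
     (if m.2 then cL (m.1 0) (m.1 1) (m.1 2) else cR (m.1 0) (m.1 1) (m.1 2)) = 0.
Proof.
move=> h1 h2 hf; rewrite -pe_test.
by rewrite (hf _ tmul tmul_bil (conj (tmul_LS h1) (tmul_A1 h2)) ebas).
Qed.

Lemma Alt_test (g : {ffun mono -> K}) : [pchar K] =i pred0 ->
  (forall i j k, (cR i j k - cL i j k) + (cR j i k - cL j i k) = 0) ->
  (forall i j k, (cR i j k - cL i j k) + (cR i k j - cL i k j) = 0) ->
  (forall i j k, cL i j k = cL j i k) ->
  ident3 (@Alt_LC K) g ->
  \sum_(m : mono) g m *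
     (if m.2 then cL (m.1 0) (m.1 1) (m.1 2) else cR (m.1 0) (m.1 1) (m.1 2)) = 0.
Proof.
move=> ch h1 h2 h3 hg; rewrite -pe_test.
by rewrite (hg _ tmul tmul_bil (conj (tmul_alt ch h1 h2) (tmul_LC h3)) ebas).
Qed.

End Test.

Lemma S3_ind (P : 'S_3 -> Prop) : P P012 -> P P102 -> P P021 -> P P201 -> P P120 -> P P210 ->
  forall s, P s.
Proof.
move=> h1 h2 h3 h4 h5 h6 s; have := S3_cover s; rewrite !inE.
by do ![case/orP=> [/eqP->//|]]; move/eqP->.
Qed.

Ltac ord3_all := move=> [[|[|[|?]]] ?] [[|[|[|?]]] ?] [[|[|[|?]]] ?] //.

Ltac subst_piv H t c :=
  let e := match type of H with ?e = 0 => e end in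
  try (rewrite [t](_ : t = t - c * e); last by rewrite H mulr0 subr0).

Definition idx (i j k : 'I_3) : nat := (9 * i + 3 * j + k)%N.
Definition tab (K : fieldType) (v : seq int) (i j k : 'I_3) : K := (nth 0 v (idx i j k))%:~R.
Arguments tab {K}.

Section Lift.
Variable K : fieldType.
Implicit Types vR vL : seq int.
Local Notation nt v i j k := (nth 0 v (idx i j k)).

Lemma liftLS1 vR vL :
  (forall i j k, nt vR i j k - nt vL i j k == nt vR j i k - nt vL j i k) ->
  forall i j k, tab vR i j k - tab vL i j k = tab vR j i k - tab vL j i k :> K.
Proof. by move=> h i j k; rewrite /tab -!intrB (eqP (h i j k)). Qed.

Lemma liftLS2 vR :
  (forall i j k, nt vR i j k + nt vR j i k + nt vR i k j + nt vR k i j + nt vR j k i + nt vR k j i == 0) ->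
  forall i j k, tab vR i j k + tab vR j i k + tab vR i k j + tab vR k i j + tab vR j k i + tab vR k j i = 0 :> K.
Proof. by move=> h i j k; rewrite /tab -!intrD (eqP (h i j k)). Qed.

Lemma liftAl1 vR vL :
  (forall i j k, (nt vR i j k - nt vL i j k) + (nt vR j i k - nt vL j i k) == 0) ->
  forall i j k, (tab vR i j k - tab vL i j k) + (tab vR j i k - tab vL j i k) = 0 :> K.
Proof. by move=> h i j k; rewrite /tab -!intrB -intrD (eqP (h i j k)). Qed.

Lemma liftAl2 vR vL :
  (forall i j k, (nt vR i j k - nt vL i j k) + (nt vR i k j - nt vL i k j) == 0) ->
  forall i j k, (tab vR i j k - tab vL i j k) + (tab vR i k j - tab vL i k j) = 0 :> K.
Proof. by move=> h i j k; rewrite /tab -!intrB -intrD (eqP (h i j k)). Qed.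

Lemma liftAl3 vL :
  (forall i j k, nt vL i j k == nt vL j i k) ->
  forall i j k, tab vL i j k = tab vL j i k :> K.
Proof. by move=> h i j k; rewrite /tab (eqP (h i j k)). Qed.
End Lift.

Section Basic.
Variable K : fieldType.
Local Notation V := {ffun mono -> K}.
Definition lsv (p q : 'S_3) : V := (dlt K (p, false) - dlt K (p, true)) - (dlt K (q, false) - dlt K (q, true)).
Definition alt2 (p q : 'S_3) : V := (dlt K (p, false) - dlt K (p, true)) + (dlt K (q, false) - dlt K (q, true)).
Definition lcv (p q : 'S_3) : V := dlt K (p, true) - dlt K (q, true).
Definition a1v : V := dlt K (P012, false) + dlt K (P102, false) + dlt K (P021, false)
  + dlt K (P201, false) + dlt K (P120, false) + dlt K (P210, false).

Lemma lsv_id (p q : 'S_3) : [&& q i0 == p i1, q i1 == p i0 & q i2 == p i2] -> ident3 (@LS_A1 K) (lsv p q).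
Proof.
case/and3P=> /eqP h0 /eqP h1 /eqP h2 A mul bil [hLS _] x.
rewrite /lsv !pe_sub !pe_dlt ?meF ?meT h0 h1 h2.
by apply/eqP; rewrite subr_eq0; apply/eqP; exact: (hLS (x (p i0)) (x (p i1)) (x (p i2))).
Qed.

Lemma a1v_id : ident3 (@LS_A1 K) a1v.
Proof.
move=> A mul bil [_ hA1] x.
rewrite /a1v !pe_add !pe_dlt ?meF ?meT !pvE.
exact: (hA1 (x i0) (x i1) (x i2)).
Qed.

Lemma altA_id (p q : 'S_3) : [&& q i0 == p i1, q i1 == p i0 & q i2 == p i2] -> ident3 (@Alt_LC K) (alt2 p q).
Proof.
case/and3P=> /eqP h0 /eqP h1 /eqP h2 A mul bil [hA _] x.
rewrite /alt2 pe_add !pe_sub !pe_dlt ?meF ?meT h0 h1 h2.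
exact: (alt_lin1 bil hA (x (p i0)) (x (p i1)) (x (p i2))).
Qed.

Lemma altB_id (p q : 'S_3) : [&& q i0 == p i0, q i1 == p i2 & q i2 == p i1] -> ident3 (@Alt_LC K) (alt2 p q).
Proof.
case/and3P=> /eqP h0 /eqP h1 /eqP h2 A mul bil [hA _] x.
rewrite /alt2 pe_add !pe_sub !pe_dlt ?meF ?meT h0 h1 h2.
exact: (alt_lin2 bil hA (x (p i0)) (x (p i1)) (x (p i2))).
Qed.

Lemma lcv_id (p q : 'S_3) : [&& q i0 == p i1, q i1 == p i0 & q i2 == p i2] -> ident3 (@Alt_LC K) (lcv p q).
Proof.
case/and3P=> /eqP h0 /eqP h1 /eqP h2 A mul bil [_ hLC] x.
rewrite /lcv !pe_sub !pe_dlt ?meF ?meT h0 h1 h2.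
by rewrite hLC subrr.
Qed.
End Basic.
Arguments lsv {K}. Arguments alt2 {K}. Arguments lcv {K}. Arguments a1v {K}.

Ltac clos := repeat first
  [ (apply: altA_id; by rewrite !pvE ?eqxx)
  | (apply: altB_id; by rewrite !pvE ?eqxx)
  | (apply: lcv_id; by rewrite !pvE ?eqxx)
  | (apply: lsv_id; by rewrite !pvE ?eqxx)
  | apply: a1v_id
  | apply: ident3_sub | apply: ident3_add | apply: ident3_sc ].
Section Final.
Variable K : fieldType.
Local Notation V := {ffun mono -> K}.

Definition lsR0 : seq int := [:: 0; 0; 0; 0; 0; 0; 0; 0; 0; 0; 0; -1; 0; 0; 0; 0; 0; 0; 0; 0; 0; 1; 0; 0; 0; 0; 0].
Definition lsL0 : seq int := [:: 0; 0; 0; 0; 0; 1; 0; 0; 0; 0; 0; 0; 0; 0; 0; 0; 0; 0; 0; 0; 0; 1; 0; 0; 0; 0; 0].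
Definition lsR1 : seq int := [:: 0; 0; 0; 0; 0; 1; 0; 0; 0; 0; 0; 1; 0; 0; 0; 0; 0; 0; 0; 0; 0; -2; 0; 0; 0; 0; 0].
Definition lsL1 : seq int := [:: 0; 0; 0; 0; 0; 0; 0; 0; 0; 0; 0; 0; 0; 0; 0; 0; 0; 0; 0; 0; 0; -2; 0; 0; 0; 0; 0].
Definition lsR2 : seq int := [:: 0; 0; 0; 0; 0; 0; 0; 0; 0; 0; 0; 1; 0; 0; 0; 0; 0; 0; 0; 0; 0; -1; 0; 0; 0; 0; 0].
Definition lsL2 : seq int := [:: 0; 0; 0; 0; 0; 0; 0; 0; 0; 0; 0; 1; 0; 0; 0; 0; 0; 0; 0; 0; 0; -1; 0; 0; 0; 0; 0].
Definition lsR3 : seq int := [:: 0; 0; 0; 0; 0; 0; 0; 0; 0; 0; 0; 0; 0; 0; 0; 0; 0; 0; 0; -1; 0; 1; 0; 0; 0; 0; 0].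
Definition lsL3 : seq int := [:: 0; 0; 0; 0; 0; 0; 0; 1; 0; 0; 0; 0; 0; 0; 0; 0; 0; 0; 0; 0; 0; 1; 0; 0; 0; 0; 0].
Definition lsR4 : seq int := [:: 0; 0; 0; 0; 0; 0; 0; 1; 0; 0; 0; 0; 0; 0; 0; 0; 0; 0; 0; 1; 0; -2; 0; 0; 0; 0; 0].
Definition lsL4 : seq int := [:: 0; 0; 0; 0; 0; 0; 0; 0; 0; 0; 0; 0; 0; 0; 0; 0; 0; 0; 0; 0; 0; -2; 0; 0; 0; 0; 0].
Definition lsR5 : seq int := [:: 0; 0; 0; 0; 0; 0; 0; 0; 0; 0; 0; 0; 0; 0; 0; 0; 0; 0; 0; 1; 0; -1; 0; 0; 0; 0; 0].
Definition lsL5 : seq int := [:: 0; 0; 0; 0; 0; 0; 0; 0; 0; 0; 0; 0; 0; 0; 0; 0; 0; 0; 0; 1; 0; -1; 0; 0; 0; 0; 0].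
Definition lsR6 : seq int := [:: 0; 0; 0; 0; 0; 0; 0; 0; 0; 0; 0; 0; 0; 0; 0; 0; 0; 0; 0; 0; 0; 0; 0; 0; 0; 0; 0].
Definition lsL6 : seq int := [:: 0; 0; 0; 0; 0; 0; 0; 0; 0; 0; 0; 0; 0; 0; 0; 1; 0; 0; 0; 0; 0; 1; 0; 0; 0; 0; 0].
Definition lsR7 : seq int := [:: 0; 0; 0; 0; 0; 0; 0; 0; 0; 0; 0; 0; 0; 0; 0; 1; 0; 0; 0; 0; 0; -1; 0; 0; 0; 0; 0].
Definition lsL7 : seq int := [:: 0; 0; 0; 0; 0; 0; 0; 0; 0; 0; 0; 0; 0; 0; 0; 0; 0; 0; 0; 0; 0; -2; 0; 0; 0; 0; 0].
Definition alR0 : seq int := [:: 0; 0; 0; 0; 0; 0; 0; 1; 0; 0; 0; 2; 0; 0; 0; -1; 0; 0; 0; -1; 0; 1; 0; 0; 0; 0; 0].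
Definition alL0 : seq int := [:: 0; 0; 0; 0; 0; 1; 0; 0; 0; 0; 0; 1; 0; 0; 0; 0; 0; 0; 0; 0; 0; 0; 0; 0; 0; 0; 0].
Definition alR1 : seq int := [:: 0; 0; 0; 0; 0; 1; 0; -1; 0; 0; 0; -1; 0; 0; 0; 1; 0; 0; 0; 1; 0; -1; 0; 0; 0; 0; 0].
Definition alL1 : seq int := [:: 0; 0; 0; 0; 0; 0; 0; 0; 0; 0; 0; 0; 0; 0; 0; 0; 0; 0; 0; 0; 0; 0; 0; 0; 0; 0; 0].
Definition alR2 : seq int := [:: 0; 0; 0; 0; 0; 0; 0; 1; 0; 0; 0; 0; 0; 0; 0; 0; 0; 0; 0; 1; 0; 0; 0; 0; 0; 0; 0].
Definition alL2 : seq int := [:: 0; 0; 0; 0; 0; 0; 0; 1; 0; 0; 0; 0; 0; 0; 0; 0; 0; 0; 0; 1; 0; 0; 0; 0; 0; 0; 0].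
Definition alR3 : seq int := [:: 0; 0; 0; 0; 0; 0; 0; 0; 0; 0; 0; 0; 0; 0; 0; 1; 0; 0; 0; 0; 0; 1; 0; 0; 0; 0; 0].
Definition alL3 : seq int := [:: 0; 0; 0; 0; 0; 0; 0; 0; 0; 0; 0; 0; 0; 0; 0; 1; 0; 0; 0; 0; 0; 1; 0; 0; 0; 0; 0].
Lemma dir2 (g : V) : [pchar K] =i pred0 -> ident3 (@Alt_LC K) g -> koszul_dual_rel (ident3 (@LS_A1 K)) g.
Proof.
move=> ch Hg f Hf.
have F0 := @LS_test K (tab lsR0) (tab lsL0) f (@liftLS1 K lsR0 lsL0 ltac:(ord3_all)) (@liftLS2 K lsR0 ltac:(ord3_all)) Hf.
have F1 := @LS_test K (tab lsR1) (tab lsL1) f (@liftLS1 K lsR1 lsL1 ltac:(ord3_all)) (@liftLS2 K lsR1 ltac:(ord3_all)) Hf.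
have F2 := @LS_test K (tab lsR2) (tab lsL2) f (@liftLS1 K lsR2 lsL2 ltac:(ord3_all)) (@liftLS2 K lsR2 ltac:(ord3_all)) Hf.
have F3 := @LS_test K (tab lsR3) (tab lsL3) f (@liftLS1 K lsR3 lsL3 ltac:(ord3_all)) (@liftLS2 K lsR3 ltac:(ord3_all)) Hf.
have F4 := @LS_test K (tab lsR4) (tab lsL4) f (@liftLS1 K lsR4 lsL4 ltac:(ord3_all)) (@liftLS2 K lsR4 ltac:(ord3_all)) Hf.
have F5 := @LS_test K (tab lsR5) (tab lsL5) f (@liftLS1 K lsR5 lsL5 ltac:(ord3_all)) (@liftLS2 K lsR5 ltac:(ord3_all)) Hf.
have F6 := @LS_test K (tab lsR6) (tab lsL6) f (@liftLS1 K lsR6 lsL6 ltac:(ord3_all)) (@liftLS2 K lsR6 ltac:(ord3_all)) Hf.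
have F7 := @LS_test K (tab lsR7) (tab lsL7) f (@liftLS1 K lsR7 lsL7 ltac:(ord3_all)) (@liftLS2 K lsR7 ltac:(ord3_all)) Hf.
have G0 := @Alt_test K (tab alR0) (tab alL0) g ch (@liftAl1 K alR0 alL0 ltac:(ord3_all)) (@liftAl2 K alR0 alL0 ltac:(ord3_all)) (@liftAl3 K alL0 ltac:(ord3_all)) Hg.
have G1 := @Alt_test K (tab alR1) (tab alL1) g ch (@liftAl1 K alR1 alL1 ltac:(ord3_all)) (@liftAl2 K alR1 alL1 ltac:(ord3_all)) (@liftAl3 K alL1 ltac:(ord3_all)) Hg.
have G2 := @Alt_test K (tab alR2) (tab alL2) g ch (@liftAl1 K alR2 alL2 ltac:(ord3_all)) (@liftAl2 K alR2 alL2 ltac:(ord3_all)) (@liftAl3 K alL2 ltac:(ord3_all)) Hg.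
have G3 := @Alt_test K (tab alR3) (tab alL3) g ch (@liftAl1 K alR3 alL3 ltac:(ord3_all)) (@liftAl2 K alR3 alL3 ltac:(ord3_all)) (@liftAl3 K alL3 ltac:(ord3_all)) Hg.
rewrite !sum_mono /= ?o0 ?o1 ?o2 !pvE /tab /idx /= in F0 F1 F2 F3 F4 F5 F6 F7 G0 G1 G2 G3.
rewrite gkE.
subst_piv F0 (f (P012, true)) (1 : K).
subst_piv F1 (f (P012, false)) (1 : K).
subst_piv F2 (f (P102, true)) (1 : K).
subst_piv F3 (f (P021, true)) (1 : K).
subst_piv F4 (f (P021, false)) (1 : K).
subst_piv F5 (f (P201, true)) (1 : K).
subst_piv F6 (f (P120, true)) (1 : K).
subst_piv F7 (f (P120, false)) (1 : K).
subst_piv G0 (g (P012, true)) (1 : K).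
subst_piv G1 (g (P012, false)) (1 : K).
subst_piv G2 (g (P021, true)) (1 : K).
subst_piv G3 (g (P120, true)) (1 : K).
ring.
Qed.

Lemma dir1 (g : V) : koszul_dual_rel (ident3 (@LS_A1 K)) g -> ident3 (@Alt_LC K) g.
Proof.
move=> Hg.
have C0 : gk_pairing ((lsv P012 P102) - (a1v)) g = 0 by apply: Hg; clos.
have C1 : gk_pairing (a1v) g = 0 by apply: Hg; clos.
have C2 : gk_pairing (lsv P021 P201) g = 0 by apply: Hg; clos.
have C3 : gk_pairing (lsv P120 P210) g = 0 by apply: Hg; clos.
rewrite /lsv /a1v ?gk_sub ?gk_add ?gk_sub !gk_dlt !oddE /= in C0 C1 C2 C3.
suff -> : g = (((((((sc (g (P102, true)) (sc (-1) (lcv P012 P102)) + sc (g (P102, false)) ((alt2 P012 P102) - (lcv P012 P102))) + sc (g (P021, false)) (alt2 P012 P021)) + sc (g (P201, true)) (sc (-1) (lcv P021 P201))) + sc (g (P201, false)) (((alt2 P021 P201) - (alt2 P012 P021)) - (lcv P021 P201))) + sc (g (P120, false)) ((sc (-1) (alt2 P012 P102)) + (alt2 P102 P120))) + sc (g (P210, true)) (sc (-1) (lcv P120 P210))) + sc (g (P210, false)) ((((alt2 P012 P102) + (alt2 P120 P210)) - (alt2 P102 P120)) - (lcv P120 P210))) by clos.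
apply/ffunP => m; rewrite (ffun_decomp g m) sum_mono /alt2 /lcv !(ffunE, scE, dltE).
subst_piv C0 (g (P012, true)) (1 : K); subst_piv C1 (g (P012, false)) (1 : K); subst_piv C2 (g (P021, true)) (-1 : K); subst_piv C3 (g (P120, true)) (1 : K); ring.
Qed.

End Final.

Unset Implicit Arguments.

Theorem mainTheorem3 (K : fieldType) (charK0 : [pchar K] =i pred0) :
  forall g : {ffun mono -> K},
    koszul_dual_rel (ident3 (@LS_A1 K)) g <-> ident3 (@Alt_LC K) g.
Proof.
move=> g; split.
  exact: dir1.
by move=> h; exact: (dir2 charK0 h).
Qed.
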